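(* Let $\mathcal{A}$ be an abelian category and consider a commutative diagram in $\mathcal{A}$ consisting of exact sequences $Q_1\xrightarrow{a}P_1\xrightarrow{p_1}F_1\to0$ and $Q_2\xrightarrow{d}P_2\xrightarrow{p_2}F_2\to 0$, together with morphisms $b:Q_1\to Q_2$, $c:P_1\to P_2$ and $h:F_1\to F_2$ such that $ca=db$ and $hp_1=p_2c$. Then for any object $M\in\mathcal{A}$ the following are equivalent: (1) the induced map $\mathrm{Hom}(F_2,M)\to\mathrm{Hom}(F_1,M)$, $\psi\mapsto\psi h$, is surjective; (2) let $\mu:Q_1\oplus Q_2\to P_1\oplus Q_2$ be the morphism with components $a:Q_1\to P_1$, $0:Q_2\to P_1$, $b:Q_1\to Q_2$, $-1:Q_2\to Q_2$, and let $\nu:P_1\oplus Q_2\to P_2$ be the morphism with components $c:P_1\to P_2$ and $-d:Q_2\to P_2$; then for every morphism $\varphi:P_1\oplus Q_2\to M$ with $\varphi\mu=0$ there exists a morphism $\gamma:P_2\to M$ with $\gamma\nu=\varphi$. *)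

(* Defs.v *)
Record AdditiveCategory := {
  Ob : Type;
  Hom : Ob -> Ob -> Type;
  comp : forall {X Y Z : Ob}, Hom Y Z -> Hom X Y -> Hom X Z;
  idm : forall X : Ob, Hom X X;
  addm : forall {X Y : Ob}, Hom X Y -> Hom X Y -> Hom X Y;
  zerom : forall X Y : Ob, Hom X Y;
  oppm : forall {X Y : Ob}, Hom X Y -> Hom X Y;
  comp_assoc : forall (W X Y Z : Ob) (f : Hom Y Z) (g : Hom X Y) (h : Hom W X),
      comp f (comp g h) = comp (comp f g) h;
  comp_id_l : forall (X Y : Ob) (f : Hom X Y), comp (idm Y) f = f;
  comp_id_r : forall (X Y : Ob) (f : Hom X Y), comp f (idm X) = f;
  addmA : forall (X Y : Ob) (f g h : Hom X Y), addm f (addm g h) = addm (addm f g) h;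
  addmC : forall (X Y : Ob) (f g : Hom X Y), addm f g = addm g f;
  add0m : forall (X Y : Ob) (f : Hom X Y), addm (zerom X Y) f = f;
  addNm : forall (X Y : Ob) (f : Hom X Y), addm (oppm f) f = zerom X Y;
  comp_addl : forall (X Y Z : Ob) (f g : Hom Y Z) (h : Hom X Y),
      comp (addm f g) h = addm (comp f h) (comp g h);
  comp_addr : forall (X Y Z : Ob) (f : Hom Y Z) (g h : Hom X Y),
      comp f (addm g h) = addm (comp f g) (comp f h);
  has_zero_object : exists Z : Ob, idm Z = zerom Z Z;
  bip : Ob -> Ob -> Ob;
  bip_inl : forall X Y : Ob, Hom X (bip X Y);
  bip_inr : forall X Y : Ob, Hom Y (bip X Y);
  bip_prl : forall X Y : Ob, Hom (bip X Y) X;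
  bip_prr : forall X Y : Ob, Hom (bip X Y) Y;
  bip_ll : forall X Y : Ob, comp (bip_prl X Y) (bip_inl X Y) = idm X;
  bip_rr : forall X Y : Ob, comp (bip_prr X Y) (bip_inr X Y) = idm Y;
  bip_lr : forall X Y : Ob, comp (bip_prl X Y) (bip_inr X Y) = zerom Y X;
  bip_rl : forall X Y : Ob, comp (bip_prr X Y) (bip_inl X Y) = zerom X Y;
  bip_sum : forall X Y : Ob,
      addm (comp (bip_inl X Y) (bip_prl X Y)) (comp (bip_inr X Y) (bip_prr X Y))
      = idm (bip X Y)
}.

Arguments comp {_ X Y Z} f g.
Arguments addm {_ X Y} f g.
Arguments oppm {_ X Y} f.
Arguments zerom {_} X Y.
Arguments idm {_} X.
Arguments bip {_} X Y.
Arguments bip_inl {_} X Y.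
Arguments bip_inr {_} X Y.
Arguments bip_prl {_} X Y.
Arguments bip_prr {_} X Y.

Section Defs.
Context {C : AdditiveCategory}.

Definition Mono {X Y : Ob C} (f : Hom C X Y) : Prop :=
  forall (W : Ob C) (g h : Hom C W X), comp f g = comp f h -> g = h.

Definition Epi {X Y : Ob C} (f : Hom C X Y) : Prop :=
  forall (W : Ob C) (g h : Hom C Y W), comp g f = comp h f -> g = h.

Definition is_kernel {X Y K : Ob C} (f : Hom C X Y) (k : Hom C K X) : Prop :=
  comp f k = zerom K Y /\
  forall (W : Ob C) (g : Hom C W X), comp f g = zerom W Y ->
    exists! u : Hom C W K, comp k u = g.

Definition is_cokernel {X Y Q : Ob C} (f : Hom C X Y) (q : Hom C Y Q) : Prop :=
  comp q f = zerom X Q /\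
  forall (W : Ob C) (g : Hom C Y W), comp g f = zerom X W ->
    exists! u : Hom C Q W, comp u q = g.

Definition is_image {X Y I : Ob C} (f : Hom C X Y) (m : Hom C I Y) : Prop :=
  exists (Q : Ob C) (q : Hom C Y Q), is_cokernel f q /\ is_kernel q m.

Definition exact_at {X Y Z : Ob C} (f : Hom C X Y) (g : Hom C Y Z) : Prop :=
  exists (I : Ob C) (m : Hom C I Y), is_image f m /\ is_kernel g m.

End Defs.

Record AbelianCategory := {
  acat :> AdditiveCategory;
  has_kernels : forall (X Y : Ob acat) (f : Hom acat X Y),
      exists (K : Ob acat) (k : Hom acat K X), is_kernel f k;
  has_cokernels : forall (X Y : Ob acat) (f : Hom acat X Y),
      exists (Q : Ob acat) (q : Hom acat Y Q), is_cokernel f q;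
  mono_normal : forall (K X : Ob acat) (k : Hom acat K X), Mono k ->
      exists (Y : Ob acat) (f : Hom acat X Y), is_kernel f k;
  epi_normal : forall (Y Q : Ob acat) (q : Hom acat Y Q), Epi q ->
      exists (X : Ob acat) (f : Hom acat X Y), is_cokernel f q
}.

(* Main.v *)
Require Import Defs.

Section Alg.
Context {C : AdditiveCategory}.

Lemma addm0 (X Y : Ob C) (f : Hom C X Y) : addm f (zerom X Y) = f.
Proof. rewrite addmC. apply add0m. Qed.

Lemma addmN (X Y : Ob C) (f : Hom C X Y) : addm f (oppm f) = zerom X Y.
Proof. rewrite addmC. apply addNm. Qed.

Lemma opp_unique (X Y : Ob C) (x y : Hom C X Y) : addm y x = zerom X Y -> y = oppm x.
Proof.
  intro H. rewrite <- (add0m _ _ _ (oppm x)), <- H, <- addmA, addmN, addm0. reflexivity.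
Qed.

Lemma self_add (X Y : Ob C) (x : Hom C X Y) : addm x x = x -> x = zerom X Y.
Proof.
  intro H. transitivity (addm (oppm x) (addm x x)).
  - rewrite addmA, addNm, add0m. reflexivity.
  - rewrite H, addNm. reflexivity.
Qed.

Lemma comp0l (X Y Z : Ob C) (f : Hom C X Y) : comp (zerom Y Z) f = zerom X Z.
Proof. apply self_add. rewrite <- comp_addl, add0m. reflexivity. Qed.

Lemma comp0r (X Y Z : Ob C) (f : Hom C Y Z) : comp f (zerom X Y) = zerom X Z.
Proof. apply self_add. rewrite <- comp_addr, add0m. reflexivity. Qed.

Lemma comp_oppl (X Y Z : Ob C) (f : Hom C Y Z) (g : Hom C X Y) :
  comp (oppm f) g = oppm (comp f g).
Proof. apply opp_unique. rewrite <- comp_addl, addNm, comp0l. reflexivity. Qed.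

Lemma comp_oppr (X Y Z : Ob C) (f : Hom C Y Z) (g : Hom C X Y) :
  comp f (oppm g) = oppm (comp f g).
Proof. apply opp_unique. rewrite <- comp_addr, addNm, comp0r. reflexivity. Qed.

Lemma oppm0 (X Y : Ob C) : oppm (zerom X Y) = zerom X Y.
Proof. symmetry. apply opp_unique. apply add0m. Qed.

Lemma oppmK (X Y : Ob C) (x : Hom C X Y) : oppm (oppm x) = x.
Proof. symmetry. apply opp_unique. apply addmN. Qed.

Lemma comp_assoc' (W X Y Z : Ob C) (f : Hom C Y Z) (g : Hom C X Y) (h : Hom C W X) :
  comp (comp f g) h = comp f (comp g h).
Proof. symmetry. apply comp_assoc. Qed.

Lemma bip_ll' (X Y W : Ob C) (g : Hom C W X) : comp (bip_prl X Y) (comp (bip_inl X Y) g) = g.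
Proof. rewrite comp_assoc, bip_ll, comp_id_l. reflexivity. Qed.
Lemma bip_rr' (X Y W : Ob C) (g : Hom C W Y) : comp (bip_prr X Y) (comp (bip_inr X Y) g) = g.
Proof. rewrite comp_assoc, bip_rr, comp_id_l. reflexivity. Qed.
Lemma bip_lr' (X Y W : Ob C) (g : Hom C W Y) : comp (bip_prl X Y) (comp (bip_inr X Y) g) = zerom W X.
Proof. rewrite comp_assoc, bip_lr, comp0l. reflexivity. Qed.
Lemma bip_rl' (X Y W : Ob C) (g : Hom C W X) : comp (bip_prr X Y) (comp (bip_inl X Y) g) = zerom W Y.
Proof. rewrite comp_assoc, bip_rl, comp0l. reflexivity. Qed.

Lemma bip_ext (X Y Z : Ob C) (f g : Hom C (bip X Y) Z) :
  comp f (bip_inl X Y) = comp g (bip_inl X Y) ->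
  comp f (bip_inr X Y) = comp g (bip_inr X Y) -> f = g.
Proof.
  intros H1 H2.
  rewrite <- (comp_id_r _ _ _ f), <- (comp_id_r _ _ _ g), <- bip_sum, !comp_addr, !comp_assoc, H1, H2.
  reflexivity.
Qed.

End Alg.

Ltac simp := repeat progress (rewrite ?comp_addl, ?comp_addr, ?comp_oppl, ?comp_oppr,
  ?comp_assoc', ?bip_ll, ?bip_rr, ?bip_lr, ?bip_rl, ?bip_ll', ?bip_rr', ?bip_lr', ?bip_rl',
  ?comp0l, ?comp0r, ?comp_id_l, ?comp_id_r, ?add0m, ?addm0, ?oppm0, ?oppmK).
Ltac simp_in H := repeat progress (rewrite ?comp_addl, ?comp_addr, ?comp_oppl, ?comp_oppr,
  ?comp_assoc', ?bip_ll, ?bip_rr, ?bip_lr, ?bip_rl, ?bip_ll', ?bip_rr', ?bip_lr', ?bip_rl',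
  ?comp0l, ?comp0r, ?comp_id_l, ?comp_id_r, ?add0m, ?addm0, ?oppm0, ?oppmK in H).

Lemma exact_zero {A : AbelianCategory} (X Y Z : Ob A) (f : Hom A X Y) (g : Hom A Y Z) :
  exact_at f g -> comp g f = zerom X Z.
Proof.
  intros [I [m [[Q [q [[Hqf _] [_ Hm]]]] [Hgm _]]]].
  destruct (Hm X f Hqf) as [u [Hu _]].
  rewrite <- Hu, comp_assoc, Hgm, comp0l. reflexivity.
Qed.

Lemma exact_factor {A : AbelianCategory} (X Y Z : Ob A) (f : Hom A X Y) (g : Hom A Y Z) :
  exact_at f g -> Epi g -> forall (W : Ob A) (k : Hom A Y W), comp k f = zerom X W ->
  exists u : Hom A Z W, comp u g = k.
Proof.
  intros [I [m [[Q [q [[Hqf Hq] [Hqm _]]]] [Hgm Hg]]]] He W k Hk.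
  destruct (Hq W k Hk) as [v [Hv _]].
  destruct (epi_normal A _ _ g He) as [X0 [f0 [Hgf0 Hcok]]].
  destruct (Hg X0 f0 Hgf0) as [w [Hw _]].
  destruct (Hcok W k) as [u [Hu _]].
  - rewrite <- Hw, <- Hv, comp_assoc', (comp_assoc _ _ _ _ _ q m w), Hqm, comp0l, comp0r. reflexivity.
  - exists u. exact Hu.
Qed.

Theorem lemma3p4 (A : AbelianCategory)
  (Q1 P1 F1 Q2 P2 F2 : Ob A)
  (a : Hom A Q1 P1) (p1 : Hom A P1 F1)
  (d : Hom A Q2 P2) (p2 : Hom A P2 F2)
  (b : Hom A Q1 Q2) (c : Hom A P1 P2) (h : Hom A F1 F2)
  (* Q1 --a--> P1 --p1--> F1 --> 0 exact *)
  (ex1 : exact_at a p1) (epi1 : Epi p1)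
  (* Q2 --d--> P2 --p2--> F2 --> 0 exact *)
  (ex2 : exact_at d p2) (epi2 : Epi p2)
  (* commutativity *)
  (comm1 : comp c a = comp d b) (comm2 : comp h p1 = comp p2 c)
  (M : Ob A) :
  let mu : Hom A (bip Q1 Q2) (bip P1 Q2) :=
    addm (comp (bip_inl P1 Q2) (comp a (bip_prl Q1 Q2)))
         (comp (bip_inr P1 Q2)
               (addm (comp b (bip_prl Q1 Q2)) (oppm (bip_prr Q1 Q2)))) in
  let nu : Hom A (bip P1 Q2) P2 :=
    addm (comp c (bip_prl P1 Q2)) (oppm (comp d (bip_prr P1 Q2))) in
  (forall phi : Hom A F1 M, exists psi : Hom A F2 M, comp psi h = phi)
  <->
  (forall phi : Hom A (bip P1 Q2) M, comp phi mu = zerom (bip Q1 Q2) M ->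
     exists gamma : Hom A P2 M, comp gamma nu = phi).
Proof.
  intros mu nu.
  pose proof (exact_zero _ _ _ _ _ ex1) as Z1.
  pose proof (exact_zero _ _ _ _ _ ex2) as Z2.
  assert (Z1' : forall W (g : Hom A W Q1), comp p1 (comp a g) = zerom W F1).
  { intros. rewrite comp_assoc, Z1, comp0l. reflexivity. }
  assert (Z2' : forall W (g : Hom A W Q2), comp p2 (comp d g) = zerom W F2).
  { intros. rewrite comp_assoc, Z2, comp0l. reflexivity. }
  split.
  - intros H1 phi Hphi.
    assert (E2 := f_equal (fun x => comp x (bip_inr Q1 Q2)) Hphi).
    assert (E1 := f_equal (fun x => comp x (bip_inl Q1 Q2)) Hphi).
    simpl in E1, E2. unfold mu in E1, E2.
    simp_in E2. simp_in E1.
    assert (G2 : comp phi (bip_inr P1 Q2) = zerom Q2 M).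
    { rewrite <- (oppmK _ _ (comp phi (bip_inr P1 Q2))), E2, oppm0. reflexivity. }
    rewrite (comp_assoc _ _ _ _ _ phi (bip_inr P1 Q2) b), G2, comp0l, addm0, comp_assoc in E1.
    destruct (exact_factor _ _ _ _ _ ex1 epi1 M _ E1) as [f Hf].
    destruct (H1 f) as [psi Hpsi].
    exists (comp psi p2).
    apply bip_ext.
    + unfold nu. simp. rewrite <- comm2, comp_assoc, Hpsi, Hf. reflexivity.
    + unfold nu. simp. rewrite Z2, comp0r, oppm0, G2. reflexivity.
  - intros H2 f.
    destruct (H2 (comp (comp f p1) (bip_prl P1 Q2))) as [gamma Hg].
    { unfold mu. simp. rewrite Z1'. simp. reflexivity. }
    assert (E1 := f_equal (fun x => comp x (bip_inl P1 Q2)) Hg).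
    assert (E2 := f_equal (fun x => comp x (bip_inr P1 Q2)) Hg).
    simpl in E1, E2. unfold nu in E1, E2.
    simp_in E2. simp_in E1.
    assert (G2 : comp gamma d = zerom Q2 M).
    { rewrite <- (oppmK _ _ (comp gamma d)), E2, oppm0. reflexivity. }
    destruct (exact_factor _ _ _ _ _ ex2 epi2 M _ G2) as [psi Hpsi].
    exists psi. apply epi1.
    rewrite comp_assoc', comm2, comp_assoc, Hpsi, E1. reflexivity.
Qed.
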